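(* Let $\mathcal{A}$ be an Abelian category. Let $L\xrightarrow{\ell_2}M\xleftarrow{r_2}R$ be a cospan with pullback $L\times_MR$ and projections $\ell_1\colon L\times_MR\to L$, $r_1\colon L\times_MR\to R$, and let $f\colon Z\to L\times_MR$ be any morphism. Let $\ell_2^*\colon\operatorname{coker}(\ell_1f)\to\operatorname{coker}(\ell_2\ell_1f)$ and $r_2^*\colon\operatorname{coker}(r_1f)\to\operatorname{coker}(\ell_2\ell_1f)=\operatorname{coker}(r_2r_1f)$ be the induced maps on cokernels. Then the canonical morphism \[u\colon\operatorname{coker}f\to\operatorname{coker}(\ell_1f)\times_{\operatorname{coker}(\ell_2\ell_1f)}\operatorname{coker}(r_1f),\] induced by the maps $\operatorname{coker}f\to\operatorname{coker}(\ell_1f)$ and $\operatorname{coker}f\to\operatorname{coker}(r_1f)$ (induced by $\ell_1$ and $r_1$), is an epimorphism. *)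

(* Defs.v *)
Set Implicit Arguments.

Record Category := {
  Ob :> Type;
  Hom : Ob -> Ob -> Type;
  idm : forall A, Hom A A;
  comp : forall A B C, Hom B C -> Hom A B -> Hom A C;
  comp_assoc : forall A B C D (h : Hom C D) (g : Hom B C) (f : Hom A B),
      comp h (comp g f) = comp (comp h g) f;
  comp_id_l : forall A B (f : Hom A B), comp (idm B) f = f;
  comp_id_r : forall A B (f : Hom A B), comp f (idm A) = f
}.

Arguments Hom {c} _ _.
Arguments idm {c} _.
Arguments comp {c A B C} _ _.

Section Defs.
Variable C : Category.

Definition is_mono {A B : C} (m : Hom A B) : Prop :=
  forall X (g h : Hom X A), comp m g = comp m h -> g = h.

Definition is_epi {A B : C} (e : Hom A B) : Prop :=
  forall X (g h : Hom B X), comp g e = comp h e -> g = h.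

Definition is_zero_object (Z : C) : Prop :=
  forall X : C, (exists f : Hom X Z, forall g, g = f) /\
                (exists f : Hom Z X, forall g, g = f).

Definition is_zero_mor {A B : C} (f : Hom A B) : Prop :=
  exists (Z : C) (g : Hom A Z) (h : Hom Z B), is_zero_object Z /\ f = comp h g.

Definition is_kernel {A B K : C} (f : Hom A B) (k : Hom K A) : Prop :=
  is_zero_mor (comp f k) /\
  forall W (g : Hom W A), is_zero_mor (comp f g) ->
    exists! h : Hom W K, comp k h = g.

Definition is_cokernel {A B Q : C} (f : Hom A B) (q : Hom B Q) : Prop :=
  is_zero_mor (comp q f) /\
  forall W (g : Hom B W), is_zero_mor (comp g f) ->
    exists! h : Hom Q W, comp h q = g.

Definition is_product {A B P : C} (p1 : Hom P A) (p2 : Hom P B) : Prop :=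
  forall W (g1 : Hom W A) (g2 : Hom W B),
    exists! h : Hom W P, comp p1 h = g1 /\ comp p2 h = g2.

Definition is_coproduct {A B S : C} (i1 : Hom A S) (i2 : Hom B S) : Prop :=
  forall W (g1 : Hom A W) (g2 : Hom B W),
    exists! h : Hom S W, comp h i1 = g1 /\ comp h i2 = g2.

Definition is_pullback {A B M P : C} (f : Hom A M) (g : Hom B M)
    (p1 : Hom P A) (p2 : Hom P B) : Prop :=
  comp f p1 = comp g p2 /\
  forall W (w1 : Hom W A) (w2 : Hom W B), comp f w1 = comp g w2 ->
    exists! h : Hom W P, comp p1 h = w1 /\ comp p2 h = w2.

Definition is_abelian : Prop :=
  (exists Z : C, is_zero_object Z) /\
  (forall A B : C, exists (P : C) (p1 : Hom P A) (p2 : Hom P B), is_product p1 p2) /\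
  (forall A B : C, exists (S : C) (i1 : Hom A S) (i2 : Hom B S), is_coproduct i1 i2) /\
  (forall (A B : C) (f : Hom A B), exists (K : C) (k : Hom K A), is_kernel f k) /\
  (forall (A B : C) (f : Hom A B), exists (Q : C) (q : Hom B Q), is_cokernel f q) /\
  (forall (A B : C) (m : Hom A B), is_mono m ->
      exists (Q : C) (f : Hom B Q), is_kernel f m) /\
  (forall (A B : C) (e : Hom A B), is_epi e ->
      exists (K : C) (f : Hom K A), is_cokernel f e).

End Defs.

Arguments is_mono {C A B} _.
Arguments is_epi {C A B} _.
Arguments is_zero_object {C} _.
Arguments is_zero_mor {C A B} _.
Arguments is_kernel {C A B K} _ _.
Arguments is_cokernel {C A B Q} _ _.
Arguments is_product {C A B P} _ _.
Arguments is_coproduct {C A B S} _ _.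
Arguments is_pullback {C A B M P} _ _ _ _.

(* Main.v *)
Require Import Defs.
From Stdlib Require Import ClassicalEpsilon.

Section Ab.
Variable C : Category.
Hypothesis HC : is_abelian C.

Local Notation "g ∘ f" := (comp g f) (at level 40, left associativity).

Lemma cA {A B X D : C} (h : Hom X D) (g : Hom B X) (f : Hom A B) : h ∘ (g ∘ f) = (h ∘ g) ∘ f.
Proof. apply comp_assoc. Qed.
Lemma idl {A B : C} (f : Hom A B) : idm B ∘ f = f.
Proof. apply comp_id_l. Qed.
Lemma idr {A B : C} (f : Hom A B) : f ∘ idm A = f.
Proof. apply comp_id_r. Qed.

Ltac ra := repeat rewrite <- cA.

Lemma rw2 {X Y Z Y' : C} {a : Hom Y Z} {b : Hom X Y} {c : Hom Y' Z} {d : Hom X Y'}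
  (E : a ∘ b = c ∘ d) {W : C} (w : Hom W X) : a ∘ (b ∘ w) = c ∘ (d ∘ w).
Proof. rewrite !cA, E. reflexivity. Qed.

Lemma ex_zero : exists Z : C, is_zero_object Z.
Proof. destruct HC as [H _]. exact H. Qed.
Definition Z0 : C := proj1_sig (constructive_indefinite_description _ ex_zero).
Lemma Z0_zero : is_zero_object Z0.
Proof. exact (proj2_sig (constructive_indefinite_description _ ex_zero)). Qed.
Lemma into_zero_uniq {Z : C} (HZ : is_zero_object Z) {A} (g h : Hom A Z) : g = h.
Proof. destruct (proj1 (HZ A)) as [f Hf]. rewrite (Hf g), (Hf h). reflexivity. Qed.
Lemma outof_zero_uniq {Z : C} (HZ : is_zero_object Z) {B} (g h : Hom Z B) : g = h.
Proof. destruct (proj2 (HZ B)) as [f Hf]. rewrite (Hf g), (Hf h). reflexivity. Qed.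
Definition to0 (A : C) : Hom A Z0 :=
  proj1_sig (constructive_indefinite_description _ (proj1 (Z0_zero A))).
Definition from0 (B : C) : Hom Z0 B :=
  proj1_sig (constructive_indefinite_description _ (proj2 (Z0_zero B))).
Definition zero (A B : C) : Hom A B := from0 B ∘ to0 A.

Lemma zero_mor_iff {A B : C} (f : Hom A B) : is_zero_mor f <-> f = zero A B.
Proof.
  split.
  - intros (Z & g & h & HZ & ->). unfold zero.
    destruct (proj1 (Z0_zero Z)) as [phi _].
    rewrite (outof_zero_uniq HZ h (from0 B ∘ phi)).
    rewrite <- cA. f_equal. apply (into_zero_uniq Z0_zero).
  - intros ->. exists Z0, (to0 A), (from0 B). split; [exact Z0_zero | reflexivity].
Qed.

Lemma zero_comp {A B D : C} (f : Hom A B) : zero B D ∘ f = zero A D.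
Proof. unfold zero. rewrite <- cA. f_equal. apply (into_zero_uniq Z0_zero). Qed.
Lemma comp_zero {A B D : C} (g : Hom B D) : g ∘ zero A B = zero A D.
Proof. unfold zero. rewrite cA. f_equal. apply (outof_zero_uniq Z0_zero). Qed.

Definition Ker {A B K : C} (f : Hom A B) (k : Hom K A) : Prop :=
  f ∘ k = zero K B /\
  forall W (g : Hom W A), f ∘ g = zero W B -> exists! h : Hom W K, k ∘ h = g.
Definition Coker {A B Q : C} (f : Hom A B) (q : Hom B Q) : Prop :=
  q ∘ f = zero A Q /\
  forall W (g : Hom B W), g ∘ f = zero A W -> exists! h : Hom Q W, h ∘ q = g.

Lemma ker_of {A B K : C} (f : Hom A B) (k : Hom K A) : is_kernel f k -> Ker f k.
Proof.
  intros [H1 H2]. split; [apply zero_mor_iff; exact H1|].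
  intros W g Hg. apply H2. apply zero_mor_iff. exact Hg.
Qed.
Lemma coker_of {A B Q : C} (f : Hom A B) (q : Hom B Q) : is_cokernel f q -> Coker f q.
Proof.
  intros [H1 H2]. split; [apply zero_mor_iff; exact H1|].
  intros W g Hg. apply H2. apply zero_mor_iff. exact Hg.
Qed.

Lemma ex_prod (A B : C) : exists (P : C) (p1 : Hom P A) (p2 : Hom P B), is_product p1 p2.
Proof. destruct HC as (_ & H & _). apply H. Qed.
Lemma ex_coprod (A B : C) : exists (S : C) (i1 : Hom A S) (i2 : Hom B S), is_coproduct i1 i2.
Proof. destruct HC as (_ & _ & H & _). apply H. Qed.
Lemma ex_ker {A B : C} (f : Hom A B) : exists (K : C) (k : Hom K A), Ker f k.
Proof. destruct HC as (_ & _ & _ & H & _). destruct (H A B f) as (K & k & Hk).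
  exists K, k. apply ker_of; exact Hk. Qed.
Lemma ex_coker {A B : C} (f : Hom A B) : exists (Q : C) (q : Hom B Q), Coker f q.
Proof. destruct HC as (_ & _ & _ & _ & H & _). destruct (H A B f) as (K & k & Hk).
  exists K, k. apply coker_of; exact Hk. Qed.
Lemma mono_is_ker {A B : C} {m : Hom A B} : is_mono m -> exists (Q : C) (f : Hom B Q), Ker f m.
Proof. destruct HC as (_ & _ & _ & _ & _ & H & _). intros Hm. destruct (H A B m Hm) as (K & k & Hk).
  exists K, k. apply ker_of; exact Hk. Qed.
Lemma epi_is_coker {A B : C} {e : Hom A B} : is_epi e -> exists (K : C) (f : Hom K A), Coker f e.
Proof. destruct HC as (_ & _ & _ & _ & _ & _ & H). intros He. destruct (H A B e He) as (K & k & Hk).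
  exists K, k. apply coker_of; exact Hk. Qed.

Lemma ker_mono {A B K : C} {f : Hom A B} {k : Hom K A} : Ker f k -> is_mono k.
Proof.
  intros [H1 H2] X g h E.
  destruct (H2 X (k ∘ g)) as [x [_ U]].
  - rewrite cA, H1. apply zero_comp.
  - rewrite <- (U g eq_refl). apply U. symmetry; exact E.
Qed.
Lemma coker_epi {A B Q : C} {f : Hom A B} {q : Hom B Q} : Coker f q -> is_epi q.
Proof.
  intros [H1 H2] X g h E.
  destruct (H2 X (g ∘ q)) as [x [_ U]].
  - rewrite <- cA, H1. apply comp_zero.
  - rewrite <- (U g eq_refl). apply U. symmetry; exact E.
Qed.
Lemma ker_fact {A B K : C} {f : Hom A B} {k : Hom K A} : Ker f k ->
  forall W (g : Hom W A), f ∘ g = zero W B -> exists h, k ∘ h = g.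
Proof. intros [_ H] W g Hg. destruct (H W g Hg) as [h [Hh _]]. exists h; exact Hh. Qed.
Lemma coker_fact {A B Q : C} {f : Hom A B} {q : Hom B Q} : Coker f q ->
  forall W (g : Hom B W), g ∘ f = zero A W -> exists h, h ∘ q = g.
Proof. intros [_ H] W g Hg. destruct (H W g Hg) as [h [Hh _]]. exists h; exact Hh. Qed.

Lemma mono_ker_coker {A B Q : C} {m : Hom A B} {c : Hom B Q} : is_mono m -> Coker m c -> Ker c m.
Proof.
  intros Hm Hc. destruct (mono_is_ker Hm) as (Q' & f & Hf).
  destruct (coker_fact Hc _ f (proj1 Hf)) as [f' Hf'].
  split; [exact (proj1 Hc)|].
  intros W g Hg. apply (proj2 Hf). rewrite <- Hf', <- cA, Hg. apply comp_zero.
Qed.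
Lemma epi_coker_ker {A B K : C} {e : Hom A B} {k : Hom K A} : is_epi e -> Ker e k -> Coker k e.
Proof.
  intros He Hk. destruct (epi_is_coker He) as (K' & f & Hf).
  destruct (ker_fact Hk _ f (proj1 Hf)) as [f' Hf'].
  split; [exact (proj1 Hk)|].
  intros W g Hg. apply (proj2 Hf). rewrite <- Hf', cA, Hg. apply zero_comp.
Qed.

Section Prod.
Context {A B P : C} {p1 : Hom P A} {p2 : Hom P B} (H : is_product p1 p2).
Definition pr {W : C} (g1 : Hom W A) (g2 : Hom W B) : Hom W P :=
  proj1_sig (constructive_indefinite_description _ (H W g1 g2)).
Lemma pr_1 {W : C} (g1 : Hom W A) (g2 : Hom W B) : p1 ∘ pr g1 g2 = g1.
Proof. exact (proj1 (proj1 (proj2_sig (constructive_indefinite_description _ (H W g1 g2))))). Qed.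
Lemma pr_2 {W : C} (g1 : Hom W A) (g2 : Hom W B) : p2 ∘ pr g1 g2 = g2.
Proof. exact (proj2 (proj1 (proj2_sig (constructive_indefinite_description _ (H W g1 g2))))). Qed.
Lemma prod_ext {W : C} (x y : Hom W P) : p1 ∘ x = p1 ∘ y -> p2 ∘ x = p2 ∘ y -> x = y.
Proof.
  intros E1 E2. destruct (H W (p1 ∘ x) (p2 ∘ x)) as [h [_ U]].
  rewrite <- (U x (conj eq_refl eq_refl)). apply U. split; symmetry; assumption.
Qed.
Lemma pr_comp {W V : C} (g1 : Hom W A) (g2 : Hom W B) (k : Hom V W) :
  pr g1 g2 ∘ k = pr (g1 ∘ k) (g2 ∘ k).
Proof. apply prod_ext; rewrite cA; rewrite ?pr_1, ?pr_2; reflexivity. Qed.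
Definition i1 : Hom A P := pr (idm A) (zero A B).
Definition i2 : Hom B P := pr (zero B A) (idm B).
Lemma p1i1 : p1 ∘ i1 = idm A. Proof. apply pr_1. Qed.
Lemma p2i1 : p2 ∘ i1 = zero A B. Proof. apply pr_2. Qed.
Lemma p1i2 : p1 ∘ i2 = zero B A. Proof. apply pr_1. Qed.
Lemma p2i2 : p2 ∘ i2 = idm B. Proof. apply pr_2. Qed.
End Prod.

Section Coprod.
Context {A B S : C} {j1 : Hom A S} {j2 : Hom B S} (H : is_coproduct j1 j2).
Definition cp {W : C} (g1 : Hom A W) (g2 : Hom B W) : Hom S W :=
  proj1_sig (constructive_indefinite_description _ (H W g1 g2)).
Lemma cp_1 {W : C} (g1 : Hom A W) (g2 : Hom B W) : cp g1 g2 ∘ j1 = g1.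
Proof. exact (proj1 (proj1 (proj2_sig (constructive_indefinite_description _ (H W g1 g2))))). Qed.
Lemma cp_2 {W : C} (g1 : Hom A W) (g2 : Hom B W) : cp g1 g2 ∘ j2 = g2.
Proof. exact (proj2 (proj1 (proj2_sig (constructive_indefinite_description _ (H W g1 g2))))). Qed.
Lemma coprod_ext {W : C} (x y : Hom S W) : x ∘ j1 = y ∘ j1 -> x ∘ j2 = y ∘ j2 -> x = y.
Proof.
  intros E1 E2. destruct (H W (x ∘ j1) (x ∘ j2)) as [h [_ U]].
  rewrite <- (U x (conj eq_refl eq_refl)). apply U. split; symmetry; assumption.
Qed.
End Coprod.

Lemma ker0_mono {A B : C} (m : Hom A B) :
  (forall W (x : Hom W A), m ∘ x = zero W B -> x = zero W A) -> is_mono m.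
Proof.
  intros H0 W x y E.
  destruct (ex_coprod W W) as (S & j1 & j2 & HS).
  set (nb := cp HS (idm W) (idm W)).
  assert (Hnb : is_epi nb).
  { intros X g h E'. assert (Hn : nb ∘ j1 = idm W) by apply cp_1.
    rewrite <- (idr g), <- (idr h), <- Hn, !cA, E'. reflexivity. }
  destruct (ex_ker nb) as (K & k & Hk).
  pose proof (epi_coker_ker Hnb Hk) as Hc.
  set (xy := cp HS x y).
  assert (E1 : m ∘ xy = (m ∘ x) ∘ nb).
  { apply (coprod_ext HS); ra; unfold xy, nb; rewrite ?cp_1, ?cp_2, ?idr; auto. }
  assert (E2 : xy ∘ k = zero K A).
  { apply H0. rewrite cA, E1, <- cA, (proj1 Hk). apply comp_zero. }
  destruct (coker_fact Hc _ xy E2) as [t Ht].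
  assert (x = t). { rewrite <- (idr t). unfold nb in Ht. rewrite <- (cp_1 HS (idm W) (idm W)), cA, Ht.
    unfold xy; rewrite cp_1; reflexivity. }
  assert (y = t). { rewrite <- (idr t). unfold nb in Ht. rewrite <- (cp_2 HS (idm W) (idm W)), cA, Ht.
    unfold xy; rewrite cp_2; reflexivity. }
  congruence.
Qed.

Lemma coker0_epi {A B : C} (e : Hom A B) :
  (forall X (x : Hom B X), x ∘ e = zero A X -> x = zero B X) -> is_epi e.
Proof.
  intros H0 X x y E.
  destruct (ex_prod X X) as (P & q1 & q2 & HP).
  set (dg := pr HP (idm X) (idm X)).
  assert (Hdg : is_mono dg).
  { intros W g h E'. assert (Hn : q1 ∘ dg = idm X) by apply pr_1.
    rewrite <- (idl g), <- (idl h), <- Hn, <- !cA, E'. reflexivity. }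
  destruct (ex_coker dg) as (K & k & Hk).
  pose proof (mono_ker_coker Hdg Hk) as Hc.
  set (xy := pr HP x y).
  assert (E1 : xy ∘ e = dg ∘ (x ∘ e)).
  { apply (prod_ext HP); rewrite !cA; unfold xy, dg; rewrite ?pr_1, ?pr_2, ?idl; auto. }
  assert (E2 : k ∘ xy = zero B K).
  { apply H0. rewrite <- cA, E1, cA, (proj1 Hk). apply zero_comp. }
  destruct (ker_fact Hc _ xy E2) as [t Ht].
  assert (x = t). { rewrite <- (idl t). unfold dg in Ht. rewrite <- (pr_1 HP (idm X) (idm X)), <- cA, Ht.
    unfold xy; rewrite pr_1; reflexivity. }
  assert (y = t). { rewrite <- (idl t). unfold dg in Ht. rewrite <- (pr_2 HP (idm X) (idm X)), <- cA, Ht.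
    unfold xy; rewrite pr_2; reflexivity. }
  congruence.
Qed.

Lemma mono_epi_iso {A B : C} {m : Hom A B} : is_mono m -> is_epi m ->
  exists s : Hom B A, m ∘ s = idm B /\ s ∘ m = idm A.
Proof.
  intros Hm He. destruct (ex_coker m) as (Q & c & Hc).
  pose proof (mono_ker_coker Hm Hc) as Hk.
  assert (c = zero B Q). { apply He. rewrite (proj1 Hc). symmetry; apply zero_comp. }
  destruct (ker_fact Hk _ (idm B)) as [s Hs]. { rewrite idr. assumption. }
  exists s. split; [exact Hs|]. apply Hm. rewrite cA, Hs, idl, idr. reflexivity.
Qed.


Lemma split_epi {A B : C} (e : Hom A B) (s : Hom B A) : e ∘ s = idm B -> is_epi e.
Proof. intros Es Y g h E. rewrite <- (idr g), <- (idr h), <- Es, !cA, E. reflexivity. Qed.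
Lemma split_mono {A B : C} (m : Hom A B) (r : Hom B A) : r ∘ m = idm A -> is_mono m.
Proof. intros Er Y g h E. rewrite <- (idl g), <- (idl h), <- Er, <- !cA, E. reflexivity. Qed.

Section Bi.
Context {A B P : C} {p1 : Hom P A} {p2 : Hom P B} (H : is_product p1 p2).

Lemma JE0 {X : C} (x : Hom P X) : x ∘ i1 H = zero A X -> x ∘ i2 H = zero B X -> x = zero P X.
Proof.
  intros E1 E2.
  assert (He : is_epi p1) by (apply (split_epi _ (i1 H)); apply p1i1).
  assert (Hk : Ker p1 (i2 H)).
  { split; [apply p1i2|]. intros W g Hg. exists (p2 ∘ g). split.
    - apply (prod_ext H); rewrite cA; [rewrite p1i2, zero_comp, Hg | rewrite p2i2, idl]; reflexivity.
    - intros h' Hh'. rewrite <- Hh', cA, p2i2, idl. reflexivity. }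
  pose proof (epi_coker_ker He Hk) as Hc.
  destruct (coker_fact Hc _ x E2) as [y Hy].
  assert (y = zero A X). { rewrite <- E1, <- Hy, <- cA, p1i1, idr. reflexivity. }
  subst y. rewrite <- Hy. apply zero_comp.
Qed.

Lemma theta_epi {S : C} {j1 : Hom A S} {j2 : Hom B S} (HS : is_coproduct j1 j2) :
  is_epi (cp HS (i1 H) (i2 H)).
Proof.
  apply coker0_epi. intros X x Hx. apply JE0.
  - rewrite <- (cp_1 HS (i1 H) (i2 H)), cA, Hx. apply zero_comp.
  - rewrite <- (cp_2 HS (i1 H) (i2 H)), cA, Hx. apply zero_comp.
Qed.

Lemma JE {X : C} (g h : Hom P X) : g ∘ i1 H = h ∘ i1 H -> g ∘ i2 H = h ∘ i2 H -> g = h.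
Proof.
  intros E1 E2. destruct (ex_coprod A B) as (S & j1 & j2 & HS).
  apply (theta_epi HS). apply (coprod_ext HS); rewrite <- !cA; rewrite ?cp_1, ?cp_2; assumption.
Qed.

Lemma JM0 {S : C} {j1 : Hom A S} {j2 : Hom B S} (HS : is_coproduct j1 j2) {W : C} (x : Hom W S) :
  cp HS (idm A) (zero B A) ∘ x = zero W A -> cp HS (zero A B) (idm B) ∘ x = zero W B -> x = zero W S.
Proof.
  intros E1 E2.
  set (pi1 := cp HS (idm A) (zero B A)). set (pi2 := cp HS (zero A B) (idm B)).
  assert (Hm : is_mono j1) by (apply (split_mono _ pi1); apply cp_1).
  assert (Hc : Coker j1 pi2).
  { split; [apply cp_1|]. intros V g Hg. exists (g ∘ j2). split.
    - apply (coprod_ext HS); rewrite <- cA; unfold pi2; [rewrite cp_1, comp_zero, Hg | rewrite cp_2, idr]; reflexivity.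
    - intros h' Hh'. rewrite <- Hh', <- cA. unfold pi2. rewrite cp_2, idr. reflexivity. }
  pose proof (mono_ker_coker Hm Hc) as Hk.
  destruct (ker_fact Hk _ x E2) as [y Hy].
  assert (y = zero W A). { rewrite <- E1, <- Hy, cA. unfold pi1. rewrite cp_1, idl. reflexivity. }
  subst y. rewrite <- Hy. apply comp_zero.
Qed.

Lemma bicp {X : C} (f : Hom A X) (g : Hom B X) :
  exists h : Hom P X, h ∘ i1 H = f /\ h ∘ i2 H = g.
Proof.
  destruct (ex_coprod A B) as (S & j1 & j2 & HS).
  set (th := cp HS (i1 H) (i2 H)).
  assert (Hm : is_mono th).
  { apply ker0_mono. intros W x Hx. apply (JM0 HS).
    - assert (E : cp HS (idm A) (zero B A) = p1 ∘ th).
      { apply (coprod_ext HS); rewrite <- cA; unfold th; rewrite ?cp_1, ?cp_2, ?p1i1, ?p1i2; reflexivity. }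
      rewrite E, <- cA, Hx. apply comp_zero.
    - assert (E : cp HS (zero A B) (idm B) = p2 ∘ th).
      { apply (coprod_ext HS); rewrite <- cA; unfold th; rewrite ?cp_1, ?cp_2, ?p2i1, ?p2i2; reflexivity. }
      rewrite E, <- cA, Hx. apply comp_zero. }
  destruct (mono_epi_iso Hm (theta_epi HS)) as [s [Hs1 Hs2]].
  exists (cp HS f g ∘ s). split.
  - rewrite <- (cp_1 HS (i1 H) (i2 H)). fold th. rewrite <- cA, (cA s th), Hs2, idl. apply cp_1.
  - rewrite <- (cp_2 HS (i1 H) (i2 H)). fold th. rewrite <- cA, (cA s th), Hs2, idl. apply cp_2.
Qed.
End Bi.

Definition prodB (B : C) : {P : C & {q1 : Hom P B & {q2 : Hom P B | is_product q1 q2}}}.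
Proof.
  destruct (constructive_indefinite_description _ (ex_prod B B)) as [P HP].
  destruct (constructive_indefinite_description _ HP) as [q1 Hq1].
  destruct (constructive_indefinite_description _ Hq1) as [q2 Hq2].
  exact (existT _ P (existT _ q1 (exist _ q2 Hq2))).
Defined.
Definition PB (B : C) : C := projT1 (prodB B).
Definition P1 (B : C) : Hom (PB B) B := projT1 (projT2 (prodB B)).
Definition P2 (B : C) : Hom (PB B) B := proj1_sig (projT2 (projT2 (prodB B))).
Definition HPB (B : C) : is_product (P1 B) (P2 B) := proj2_sig (projT2 (projT2 (prodB B))).

Definition nab (B : C) : Hom (PB B) B :=
  proj1_sig (constructive_indefinite_description _ (bicp (HPB B) (idm B) (idm B))).
Lemma nab_1 B : nab B ∘ i1 (HPB B) = idm B.
Proof. exact (proj1 (proj2_sig (constructive_indefinite_description _ (bicp (HPB B) (idm B) (idm B))))). Qed.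
Lemma nab_2 B : nab B ∘ i2 (HPB B) = idm B.
Proof. exact (proj2 (proj2_sig (constructive_indefinite_description _ (bicp (HPB B) (idm B) (idm B))))). Qed.

Definition add {A B : C} (x y : Hom A B) : Hom A B := nab B ∘ pr (HPB B) x y.

Lemma pr_x0 {A B : C} (x : Hom A B) : pr (HPB B) x (zero A B) = i1 (HPB B) ∘ x.
Proof. apply (prod_ext (HPB B)); rewrite ?pr_1, ?pr_2, cA; rewrite ?p1i1, ?p2i1, ?idl, ?zero_comp; reflexivity. Qed.
Lemma pr_0x {A B : C} (x : Hom A B) : pr (HPB B) (zero A B) x = i2 (HPB B) ∘ x.
Proof. apply (prod_ext (HPB B)); rewrite ?pr_1, ?pr_2, cA; rewrite ?p1i2, ?p2i2, ?idl, ?zero_comp; reflexivity. Qed.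

Lemma add0r {A B : C} (x : Hom A B) : add x (zero A B) = x.
Proof. unfold add. rewrite pr_x0, cA, nab_1, idl. reflexivity. Qed.
Lemma add0l {A B : C} (x : Hom A B) : add (zero A B) x = x.
Proof. unfold add. rewrite pr_0x, cA, nab_2, idl. reflexivity. Qed.

Lemma add_compl {A B D : C} (x y : Hom A B) (h : Hom D A) : add x y ∘ h = add (x ∘ h) (y ∘ h).
Proof. unfold add. rewrite <- cA, pr_comp. reflexivity. Qed.

Lemma addC {A B : C} (x y : Hom A B) : add x y = add y x.
Proof.
  unfold add. set (sw := pr (HPB B) (P2 B) (P1 B)).
  assert (E : pr (HPB B) y x = sw ∘ pr (HPB B) x y).
  { unfold sw. rewrite pr_comp, pr_1, pr_2. reflexivity. }
  assert (E2 : nab B ∘ sw = nab B).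
  { apply (JE (HPB B)); rewrite <- cA; unfold sw; rewrite pr_comp.
    - rewrite p1i1, p2i1, pr_0x, cA, nab_1, nab_2, idl. reflexivity.
    - rewrite p1i2, p2i2, pr_x0, cA, nab_1, nab_2, idl. reflexivity. }
  rewrite E, cA, E2. reflexivity.
Qed.

Lemma add_compr {A B D : C} (x y : Hom A B) (h : Hom B D) : h ∘ add x y = add (h ∘ x) (h ∘ y).
Proof.
  unfold add. set (hh := pr (HPB D) (h ∘ P1 B) (h ∘ P2 B)).
  assert (E : h ∘ nab B = nab D ∘ hh).
  { apply (JE (HPB B)); rewrite <- !cA; unfold hh; rewrite pr_comp, <- !cA.
    - rewrite p1i1, p2i1, idr, comp_zero, pr_x0, nab_1, cA, nab_1, idl, idr. reflexivity.
    - rewrite p1i2, p2i2, idr, comp_zero, pr_0x, nab_2, cA, nab_2, idl, idr. reflexivity. }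
  rewrite cA, E, <- cA. f_equal. unfold hh. rewrite pr_comp, <- !cA, pr_1, pr_2. reflexivity.
Qed.

Lemma addA {A B : C} (x y z : Hom A B) : add (add x y) z = add x (add y z).
Proof.
  destruct (ex_prod (PB B) B) as (T & q1 & q2 & HT).
  set (w := pr HT (pr (HPB B) x y) z).
  assert (Ex : x = (P1 B ∘ q1) ∘ w). { unfold w. rewrite <- cA, pr_1, pr_1. reflexivity. }
  assert (Ey : y = (P2 B ∘ q1) ∘ w). { unfold w. rewrite <- cA, pr_1, pr_2. reflexivity. }
  assert (Ez : z = q2 ∘ w). { unfold w. rewrite pr_2. reflexivity. }
  assert (E : add (add (P1 B ∘ q1) (P2 B ∘ q1)) q2 = add (P1 B ∘ q1) (add (P2 B ∘ q1) q2)).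
  { apply (JE HT); rewrite !add_compl, <- !cA.
    - rewrite p1i1, p2i1, idr, add0r, add0r. reflexivity.
    - rewrite p1i2, p2i2, !comp_zero, add0r; repeat rewrite add0l. reflexivity. }
  rewrite Ex, Ey, Ez, <- (add_compl (P1 B ∘ q1) (P2 B ∘ q1) w), <- (add_compl _ q2 w), <- (add_compl (P2 B ∘ q1) q2 w), <- (add_compl (P1 B ∘ q1) _ w), E. reflexivity.
Qed.

Definition shear (B : C) : Hom (PB B) (PB B) := pr (HPB B) (P1 B) (add (P1 B) (P2 B)).

Lemma shear_iso (B : C) : exists s, shear B ∘ s = idm (PB B) /\ s ∘ shear B = idm (PB B).
Proof.
  apply mono_epi_iso.
  - apply ker0_mono. intros W x Hx.
    assert (E1 : P1 B ∘ x = zero W B).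
    { unfold shear in Hx. rewrite <- (pr_1 (HPB B) (P1 B) (add (P1 B) (P2 B))), <- cA, Hx. apply comp_zero. }
    assert (E2 : add (P1 B ∘ x) (P2 B ∘ x) = zero W B).
    { rewrite <- add_compl. unfold shear in Hx. rewrite <- (pr_2 (HPB B) (P1 B) (add (P1 B) (P2 B))), <- cA, Hx. apply comp_zero. }
    rewrite E1, add0l in E2.
    apply (prod_ext (HPB B)); rewrite comp_zero; assumption.
  - apply coker0_epi. intros X y Hy.
    assert (E : shear B ∘ i1 (HPB B) = add (i1 (HPB B)) (i2 (HPB B))).
    { unfold shear. rewrite pr_comp, add_compl.
      apply (prod_ext (HPB B)); rewrite ?pr_1, ?pr_2, !add_compr, ?p1i1, ?p1i2, ?p2i1, ?p2i2, ?add0r, ?add0l; reflexivity. }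
    assert (E2 : shear B ∘ i2 (HPB B) = i2 (HPB B)).
    { unfold shear. rewrite pr_comp, add_compl.
      apply (prod_ext (HPB B)); rewrite ?pr_1, ?pr_2, ?p1i1, ?p1i2, ?p2i1, ?p2i2, ?add0r, ?add0l; reflexivity. }
    assert (Y2 : y ∘ i2 (HPB B) = zero B X).
    { rewrite <- E2, cA, Hy. apply zero_comp. }
    apply (JE0 (HPB B)); [|exact Y2].
    transitivity (y ∘ add (i1 (HPB B)) (i2 (HPB B))).
    { rewrite add_compr, Y2, add0r. reflexivity. }
    rewrite <- E, cA, Hy. apply zero_comp.
Qed.

Definition shinv (B : C) : Hom (PB B) (PB B) :=
  proj1_sig (constructive_indefinite_description _ (shear_iso B)).
Lemma shinv_r B : shear B ∘ shinv B = idm (PB B).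
Proof. exact (proj1 (proj2_sig (constructive_indefinite_description _ (shear_iso B)))). Qed.

Definition negone (B : C) : Hom B B := P2 B ∘ (shinv B ∘ i1 (HPB B)).

Lemma add_negone B : add (idm B) (negone B) = zero B B.
Proof.
  assert (F1 : P1 B ∘ shinv B = P1 B).
  { transitivity ((P1 B ∘ shear B) ∘ shinv B). { unfold shear; rewrite pr_1; reflexivity. }
    rewrite <- cA, shinv_r, idr; reflexivity. }
  assert (F2 : add (P1 B) (P2 B) ∘ shinv B = P2 B).
  { transitivity ((P2 B ∘ shear B) ∘ shinv B). { unfold shear; rewrite pr_2; reflexivity. }
    rewrite <- cA, shinv_r, idr; reflexivity. }
  transitivity (add (P1 B ∘ (shinv B ∘ i1 (HPB B))) (P2 B ∘ (shinv B ∘ i1 (HPB B)))).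
  { unfold negone. rewrite (cA (P1 B) (shinv B)), F1, p1i1. reflexivity. }
  rewrite <- add_compl, cA, F2, p2i1. reflexivity.
Qed.

Definition opp {A B : C} (x : Hom A B) : Hom A B := negone B ∘ x.

Lemma addN {A B : C} (x : Hom A B) : add x (opp x) = zero A B.
Proof.
  transitivity (add (idm B) (negone B) ∘ x).
  { rewrite add_compl, idl. reflexivity. }
  rewrite add_negone. apply zero_comp.
Qed.
Lemma addNl {A B : C} (x : Hom A B) : add (opp x) x = zero A B.
Proof. rewrite addC. apply addN. Qed.

Lemma inv_uniq {A B : C} (a b : Hom A B) : add a b = zero A B -> b = opp a.
Proof.
  intros E. rewrite <- (add0r b), <- (addN a), <- addA, (addC b a), E, add0l. reflexivity.
Qed.
Lemma opp_opp {A B : C} (a : Hom A B) : opp (opp a) = a.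
Proof. symmetry. apply inv_uniq. apply addNl. Qed.
Lemma opp_zero {A B : C} : opp (zero A B) = zero A B.
Proof. apply comp_zero. Qed.
Lemma opp_eq0 {A B : C} (a : Hom A B) : opp a = zero A B -> a = zero A B.
Proof. intros E. rewrite <- (opp_opp a), E. apply opp_zero. Qed.
Lemma comp_oppl {A B D : C} (x : Hom A B) (h : Hom D A) : opp x ∘ h = opp (x ∘ h).
Proof. unfold opp. rewrite cA. reflexivity. Qed.
Lemma comp_oppr {A B D : C} (x : Hom A B) (h : Hom B D) : h ∘ opp x = opp (h ∘ x).
Proof.
  assert (E : h ∘ negone B = negone D ∘ h).
  { apply inv_uniq. rewrite <- (idr h) at 1. rewrite <- add_compr, add_negone. apply comp_zero. }
  unfold opp. rewrite cA, E, <- cA. reflexivity.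
Qed.

Definition sub {A B : C} (x y : Hom A B) : Hom A B := add x (opp y).
Lemma sub_compl {A B D : C} (x y : Hom A B) (h : Hom D A) : sub x y ∘ h = sub (x ∘ h) (y ∘ h).
Proof. unfold sub. rewrite add_compl, comp_oppl. reflexivity. Qed.
Lemma sub_compr {A B D : C} (x y : Hom A B) (h : Hom B D) : h ∘ sub x y = sub (h ∘ x) (h ∘ y).
Proof. unfold sub. rewrite add_compr, comp_oppr. reflexivity. Qed.
Lemma sub_eq0 {A B : C} (a b : Hom A B) : sub a b = zero A B -> a = b.
Proof. intros E. apply inv_uniq in E. rewrite <- (opp_opp a), <- E, opp_opp. reflexivity. Qed.
Lemma sub_diag {A B : C} (a : Hom A B) : sub a a = zero A B.
Proof. apply addN. Qed.
Lemma sub_0l {A B : C} (a : Hom A B) : sub (zero A B) a = opp a.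
Proof. apply add0l. Qed.
Lemma sub_0r {A B : C} (a : Hom A B) : sub a (zero A B) = a.
Proof. unfold sub. rewrite opp_zero. apply add0r. Qed.
Lemma sub_swap {A B : C} (a b c : Hom A B) : sub a b = c -> sub a c = b.
Proof.
  intros E.
  assert (Ea : a = add c b). { rewrite <- E. unfold sub. rewrite addA, addNl, add0r. reflexivity. }
  rewrite Ea. unfold sub. rewrite (addC c b), addA, addN, add0r. reflexivity.
Qed.

Lemma ex_pullback {A B M : C} (f : Hom A M) (g : Hom B M) :
  exists (P : C) (pA : Hom P A) (pB : Hom P B), is_pullback f g pA pB.
Proof.
  destruct (ex_prod A B) as (T & s1 & s2 & HT).
  destruct (ex_ker (sub (f ∘ s1) (g ∘ s2))) as (K & k & Hk).
  exists K, (s1 ∘ k), (s2 ∘ k). split.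
  - apply sub_eq0. rewrite !cA, <- sub_compl. exact (proj1 Hk).
  - intros W w1 w2 E.
    destruct (proj2 Hk W (pr HT w1 w2)) as [h [Hh U]].
    { rewrite sub_compl, <- !cA, pr_1, pr_2, E. apply sub_diag. }
    exists h. split.
    + rewrite <- !cA, Hh, pr_1, pr_2. split; reflexivity.
    + intros h' [H1 H2]. apply U. apply (prod_ext HT); rewrite pr_1 || rewrite pr_2; rewrite cA; assumption.
Qed.

Lemma pb_ext {A B M P : C} {f : Hom A M} {g : Hom B M} {pA : Hom P A} {pB : Hom P B}
  (H : is_pullback f g pA pB) {W : C} (x y : Hom W P) : pA ∘ x = pA ∘ y -> pB ∘ x = pB ∘ y -> x = y.
Proof.
  intros E1 E2. destruct (proj2 H W (pA ∘ x) (pB ∘ x)) as [h [_ U]].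
  { rewrite !cA, (proj1 H). reflexivity. }
  rewrite <- (U x (conj eq_refl eq_refl)). apply U. split; symmetry; assumption.
Qed.

Lemma epi_pullback {A B M P : C} {f : Hom A M} {g : Hom B M} {pA : Hom P A} {pB : Hom P B}
  (H : is_pullback f g pA pB) : is_epi g -> is_epi pA.
Proof.
  intros Hg. apply coker0_epi. intros X y Hy.
  destruct (ex_prod A B) as (T & s1 & s2 & HT).
  set (phi := sub (f ∘ s1) (g ∘ s2)).
  assert (Ephi : phi ∘ i2 HT = opp g).
  { unfold phi. rewrite sub_compl, <- !cA, p1i2, p2i2, comp_zero, idr. apply sub_0l. }
  assert (Hphi : is_epi phi).
  { apply coker0_epi. intros Y r Hr. apply Hg. rewrite zero_comp. apply opp_eq0.
    rewrite <- comp_oppr, <- Ephi, cA, Hr. apply zero_comp. }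
  destruct (ex_ker phi) as (K & k & Hk).
  pose proof (epi_coker_ker Hphi Hk) as Hc.
  assert (Ek : y ∘ s1 ∘ k = zero K X).
  { destruct (proj2 H K (s1 ∘ k) (s2 ∘ k)) as [h [[H1 H2] _]].
    { apply sub_eq0. rewrite !cA, <- sub_compl. exact (proj1 Hk). }
    rewrite <- cA, <- H1, cA, Hy. apply zero_comp. }
  destruct (coker_fact Hc _ _ Ek) as [r Hr].
  assert (Er : r = zero M X).
  { apply Hg. rewrite zero_comp. apply opp_eq0. rewrite <- comp_oppr, <- Ephi, cA, Hr, <- cA, p1i2.
    apply comp_zero. }
  subst r. rewrite zero_comp in Hr.
  rewrite <- (idr y), <- (p1i1 HT), cA, <- Hr. apply zero_comp.
Qed.

Lemma pb_sym {A B M P : C} {f : Hom A M} {g : Hom B M} {pA : Hom P A} {pB : Hom P B} :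
  is_pullback f g pA pB -> is_pullback g f pB pA.
Proof.
  intros [E H]. split; [symmetry; exact E|].
  intros W w1 w2 Ew. destruct (H W w2 w1 (eq_sym Ew)) as [h [[H1 H2] U]].
  exists h. split; [split; assumption|]. intros h' [H1' H2']. apply U. split; assumption.
Qed.

Lemma epi_comp {A B D : C} (g : Hom B D) (f : Hom A B) : is_epi g -> is_epi f -> is_epi (g ∘ f).
Proof. intros Hg Hf X x y E. apply Hg. apply Hf. rewrite <- !cA. exact E. Qed.
Lemma mono_comp {A B D : C} (g : Hom B D) (f : Hom A B) : is_mono g -> is_mono f -> is_mono (g ∘ f).
Proof. intros Hg Hf X x y E. apply Hf. apply Hg. rewrite !cA. exact E. Qed.

Lemma image_epi {Z M Q K : C} {g : Hom Z M} {c : Hom M Q} {k : Hom K M} (e : Hom Z K) :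
  Coker g c -> Ker c k -> k ∘ e = g -> is_epi e.
Proof.
  intros Hc Hk Ee. apply coker0_epi. intros X s Hs.
  destruct (ex_ker s) as (I & m & Hm).
  destruct (ker_fact Hm _ e Hs) as [e' He'].
  assert (Hkm : is_mono (k ∘ m)) by (apply mono_comp; [exact (ker_mono Hk) | exact (ker_mono Hm)]).
  destruct (ex_coker (k ∘ m)) as (D & d & Hd).
  pose proof (mono_ker_coker Hkm Hd) as Hkd.
  assert (Edg : d ∘ g = zero Z D).
  { rewrite <- Ee, <- He', (cA k m e'), (cA d (k ∘ m) e'), (proj1 Hd). apply zero_comp. }
  destruct (coker_fact Hc _ d Edg) as [d' Hd'].
  destruct (ker_fact Hkd _ k) as [n Hn].
  { rewrite <- Hd', <- cA, (proj1 Hk). apply comp_zero. }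
  assert (Emn : m ∘ n = idm K).
  { apply (ker_mono Hk). rewrite idr, cA. exact Hn. }
  rewrite <- (idr s), <- Emn, cA, (proj1 Hm). apply zero_comp.
Qed.

Lemma lift {Z M Q : C} {g : Hom Z M} {c : Hom M Q} : Coker g c ->
  forall T (h : Hom T M), c ∘ h = zero T Q ->
  exists (T' : C) (t : Hom T' T) (z : Hom T' Z), is_epi t /\ h ∘ t = g ∘ z.
Proof.
  intros Hc T h Hh.
  destruct (ex_ker c) as (K & k & Hk).
  destruct (ker_fact Hk _ h Hh) as [h' Hh'].
  destruct (ker_fact Hk _ g (proj1 Hc)) as [e He].
  pose proof (image_epi e Hc Hk He) as Hee.
  destruct (ex_pullback h' e) as (T' & t & z & Hpb).
  exists T', t, z. split.
  - exact (epi_pullback Hpb Hee).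
  - rewrite <- Hh', <- He, <- !cA, (proj1 Hpb). reflexivity.
Qed.


Lemma main_thm
  (L M R : C) (l2 : Hom L M) (r2 : Hom R M)
  (P : C) (l1 : Hom P L) (r1 : Hom P R) (Hpb : is_pullback l2 r2 l1 r1)
  (Z : C) (f : Hom Z P)
  (Cf : C) (cf : Hom P Cf) (Hcf : is_cokernel f cf)
  (CL : C) (cL : Hom L CL) (HcL : is_cokernel (comp l1 f) cL)
  (CR : C) (cR : Hom R CR) (HcR : is_cokernel (comp r1 f) cR)
  (CM : C) (cM : Hom M CM) (HcM : is_cokernel (comp l2 (comp l1 f)) cM)
  (l2s : Hom CL CM) (Hl2s : comp l2s cL = comp cM l2)
  (r2s : Hom CR CM) (Hr2s : comp r2s cR = comp cM r2)
  (a : Hom Cf CL) (Ha : comp a cf = comp cL l1)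
  (b : Hom Cf CR) (Hb : comp b cf = comp cR r1)
  (Q : C) (q1 : Hom Q CL) (q2 : Hom Q CR) (Hq : is_pullback l2s r2s q1 q2)
  (u : Hom Cf Q) (Hu1 : comp q1 u = a) (Hu2 : comp q2 u = b) :
  is_epi u.
Proof.
  pose proof (coker_of _ _ HcL) as HcL'.
  pose proof (coker_of _ _ HcR) as HcR'.
  pose proof (coker_of _ _ HcM) as HcM'.
  destruct (ex_pullback q1 cL) as (Qa & t1 & la & Ha1).
  pose proof (epi_pullback Ha1 (coker_epi HcL')) as Et1.
  destruct (ex_pullback (q2 ∘ t1) cR) as (Qb & t2 & rb & Hb2).
  pose proof (epi_pullback Hb2 (coker_epi HcR')) as Et2.
  set (h := sub (l2 ∘ (la ∘ t2)) (r2 ∘ rb)).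
  assert (Ch : cM ∘ h = zero Qb CM).
  { unfold h. rewrite sub_compr.
    replace (cM ∘ (l2 ∘ (la ∘ t2))) with (cM ∘ (r2 ∘ rb)) by
      (symmetry; rewrite (rw2 (eq_sym Hl2s)), (rw2 (eq_sym (proj1 Ha1))), (rw2 (proj1 Hq));
       rewrite (cA q2 t1 t2), (proj1 Hb2), (cA r2s cR rb), Hr2s, <- cA; reflexivity).
    apply sub_diag. }
  destruct (lift HcM' Qb h Ch) as (Qc & t3 & z & Et3 & Ht3).
  assert (E5 : l2 ∘ sub ((la ∘ t2) ∘ t3) (l1 ∘ f ∘ z) = r2 ∘ (rb ∘ t3)).
  { rewrite sub_compr. apply sub_swap. unfold h in Ht3. rewrite sub_compl in Ht3.
    repeat rewrite cA in Ht3. repeat rewrite cA. exact Ht3. }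
  destruct (proj2 Hpb Qc _ _ E5) as [p [[Hp1 Hp2] _]].
  assert (Eu : u ∘ (cf ∘ p) = t1 ∘ (t2 ∘ t3)).
  { apply (pb_ext Hq).
    - rewrite (cA q1 u), Hu1, (cA a cf p), Ha, <- (cA cL l1 p), Hp1, sub_compr.
      replace (cL ∘ (l1 ∘ f ∘ z)) with (zero Qc CL)
        by (rewrite cA, (proj1 HcL'); symmetry; apply zero_comp).
      rewrite sub_0r, !cA, (proj1 Ha1). reflexivity.
    - rewrite (cA q2 u), Hu2, (cA b cf p), Hb, <- (cA cR r1 p), Hp2, !cA, (proj1 Hb2). reflexivity. }
  assert (ET : is_epi (t1 ∘ (t2 ∘ t3))) by (apply epi_comp; [exact Et1 | apply epi_comp; assumption]).
  intros X g1 g2 E. apply ET. rewrite <- Eu, !cA, E. reflexivity.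
Qed.

End Ab.

Theorem lemma2p11 (C : Category) (HC : is_abelian C)
  (L M R : C) (l2 : Hom L M) (r2 : Hom R M)
  (P : C) (l1 : Hom P L) (r1 : Hom P R) (Hpb : is_pullback l2 r2 l1 r1)
  (Z : C) (f : Hom Z P)
  (Cf : C) (cf : Hom P Cf) (Hcf : is_cokernel f cf)
  (CL : C) (cL : Hom L CL) (HcL : is_cokernel (comp l1 f) cL)
  (CR : C) (cR : Hom R CR) (HcR : is_cokernel (comp r1 f) cR)
  (CM : C) (cM : Hom M CM) (HcM : is_cokernel (comp l2 (comp l1 f)) cM)
  (l2s : Hom CL CM) (Hl2s : comp l2s cL = comp cM l2)
  (r2s : Hom CR CM) (Hr2s : comp r2s cR = comp cM r2)
  (a : Hom Cf CL) (Ha : comp a cf = comp cL l1)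
  (b : Hom Cf CR) (Hb : comp b cf = comp cR r1)
  (Q : C) (q1 : Hom Q CL) (q2 : Hom Q CR) (Hq : is_pullback l2s r2s q1 q2)
  (u : Hom Cf Q) (Hu1 : comp q1 u = a) (Hu2 : comp q2 u = b) :
  is_epi u.
Proof.
  exact (main_thm C HC L M R l2 r2 P l1 r1 Hpb Z f Cf cf Hcf CL cL HcL CR cR HcR CM cM HcM
    l2s Hl2s r2s Hr2s a Ha b Hb Q q1 q2 Hq u Hu1 Hu2).
Qed.
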